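(* Let $r\le s$, $M$ the space of complex $r\times s$ matrices, and $\lambda,\lambda'$ pre-partitions of length at most $r$ with associated orbits $O_\lambda,O_{\lambda'}\subset M_\infty$. If $O_{\lambda'}$ is contained in the Zariski closure of $O_\lambda$, then $\lambda\lhd\lambda'$, i.e. $\lambda_i+\dots+\lambda_r\le\lambda'_i+\dots+\lambda'_r$ for all $i$.
   Context: The $\mathbb{C}$-points of the arc space $M_\infty$ are $r\times s$ matrices over $\mathbb{C}[[t]]$, acted on by $G_\infty$, $G=GL_r\times GL_s$, via $(g,h)\cdot A=gAh^{-1}$. A pre-partition of length at most $r$ is $\lambda_1\ge\dots\ge\lambda_r\ge0$ in $\mathbb N\cup\{\infty\}$ (with $\infty>n$, $\infty+n=\infty$). $\delta_\lambda$ is the $r\times s$ matrix with first $s-r$ columns zero and last $r$ columns $\mathrm{diag}(t^{\lambda_1},\dots,t^{\lambda_r})$ ($t^\infty=0$), and $O_\lambda=G_\infty\cdot\delta_\lambda$. *)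

(* Defs.v *)
(* The field of complex numbers is modelled as  R[i]  =
   complex R  for an arbitrary  R : realType  (a complete archimedean
   ordered field, i.e. a model of the real numbers). *)
From HB Require Import structures.
From mathcomp Require Import all_boot all_order all_algebra.
From mathcomp Require Import complex.
From mathcomp Require Import reals.
Set Implicit Arguments. Unset Strict Implicit. Unset Printing Implicit Defensive.
Import Order.TTheory GRing.Theory Num.Theory.
Local Open Scope ring_scope.

Inductive enat := Fin of nat | Inf.

Definition eadd (a b : enat) : enat :=
  match a, b with Fin m, Fin n => Fin (m + n) | _, _ => Inf end.

Definition ele (a b : enat) : bool :=
  match a, b with
  | _, Inf => true
  | Inf, Fin _ => false
  | Fin m, Fin n => (m <= n)%N
  end.

(* pre-partition of length at most r : lambda_1 >= ... >= lambda_r >= 0,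
   indexed here by 'I_r (index i : 'I_r stands for lambda_{i+1}). *)
Definition prepartition (r : nat) (lam : 'I_r -> enat) : Prop :=
  forall i j : 'I_r, (i <= j)%N -> ele (lam j) (lam i).

Definition tailsum (r : nat) (lam : 'I_r -> enat) (i : 'I_r) : enat :=
  \big[eadd/Fin 0]_(j < r | (i <= j)%N) lam j.

Definition ledom (r : nat) (lam lam' : 'I_r -> enat) : Prop :=
  forall i : 'I_r, ele (tailsum lam i) (tailsum lam' i).

Definition pser (K : Type) := nat -> K.

Definition pmul (K : comNzRingType) (f g : pser K) : pser K :=
  fun n => \sum_(k < n.+1) f k * g (n - k)%N.

(* t^a, with t^∞ = 0 *)
Definition tpow (K : comNzRingType) (a : enat) : pser K :=
  fun k => match a with Fin n => if k == n then 1 else 0 | Inf => 0 end.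

(* an m x n matrix over K[[t]] (a K-point of the arc space of m x n matrices) *)
Definition arcmx (K : Type) (m n : nat) := 'I_m -> 'I_n -> pser K.

Definition amul (K : comNzRingType) (m n p : nat)
  (A : arcmx K m n) (B : arcmx K n p) : arcmx K m p :=
  fun i j k => \sum_(l < n) pmul (A i l) (B l j) k.

Definition aone (K : comNzRingType) (n : nat) : arcmx K n n :=
  fun i j k => if (i == j) && (k == 0%N) then 1 else 0.

Definition aeq (K : Type) (m n : nat) (A B : arcmx K m n) : Prop :=
  forall i j k, A i j k = B i j k.

Definition is_inverse (K : comNzRingType) (n : nat) (g ginv : arcmx K n n) : Prop :=
  aeq (amul g ginv) (@aone K n) /\ aeq (amul ginv g) (@aone K n).

(* delta_lambda : first s - r columns zero, last r columns diag(t^lambda_i) *)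
Definition delta_lam (K : comNzRingType) (r s : nat) (lam : 'I_r -> enat) : arcmx K r s :=
  fun i j => if (j : nat) == (s - r + i)%N then @tpow K (lam i) else (fun _ => 0).

(* O_lambda = G_oo . delta_lambda, with (g,h).A = g A h^{-1} *)
Definition arc_orbit (K : comNzRingType) (r s : nat) (lam : 'I_r -> enat)
  (A : arcmx K r s) : Prop :=
  exists (g ginv : arcmx K r r) (h hinv : arcmx K s s),
    is_inverse g ginv /\ is_inverse h hinv /\
    aeq A (amul (amul g (@delta_lam K r s lam)) hinv).

(* regular functions on M_oo : polynomials in the coordinates
   x_{ij,k}(A) = k-th coefficient of A i j *)
Inductive polyfun (K : comNzRingType) (m n : nat) : (arcmx K m n -> K) -> Prop :=
  | pf_const (c : K) : polyfun (fun _ => c)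
  | pf_coord (i : 'I_m) (j : 'I_n) (k : nat) : polyfun (fun A => A i j k)
  | pf_add f g : polyfun f -> polyfun g -> polyfun (fun A => f A + g A)
  | pf_mul f g : polyfun f -> polyfun g -> polyfun (fun A => f A * g A).

Definition zclosure (K : comNzRingType) (m n : nat) (S : arcmx K m n -> Prop)
  (B : arcmx K m n) : Prop :=
  forall f, polyfun f -> (forall A, S A -> f A = 0) -> f B = 0.

(* Main.v *)
Require Import Defs.
From HB Require Import structures.
From mathcomp Require Import all_boot all_order all_algebra.
From mathcomp Require Import complex.
From mathcomp Require Import reals.
From mathcomp Require Import zify ring perm.
From Stdlib Require Import FunctionalExtensionality.
Set Implicit Arguments. Unset Strict Implicit. Unset Printing Implicit Defensive.
Import Order.TTheory GRing.Theory Num.Theory.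
Local Open Scope ring_scope.

Section Lowz.
Variable K : comNzRingType.

Definition lowz (n : nat) (p : {poly K}) : Prop := forall m, (m < n)%N -> p`_m = 0.

Lemma lowz0 n : lowz n 0.
Proof. by move=> m _; rewrite coef0. Qed.

Lemma lowzD n p q : lowz n p -> lowz n q -> lowz n (p + q).
Proof. by move=> hp hq m hm; rewrite coefD hp // hq // addr0. Qed.

Lemma lowzN n p : lowz n p -> lowz n (- p).
Proof. by move=> hp m hm; rewrite coefN hp // oppr0. Qed.

Lemma lowzW a b p : (b <= a)%N -> lowz a p -> lowz b p.
Proof. by move=> hba hp m hm; apply: hp; apply: leq_trans hba. Qed.

Lemma lowzM a b p q : lowz a p -> lowz b q -> lowz (a + b) (p * q).
Proof.
move=> hp hq m hm; rewrite coefM big1 // => j _.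
have [ja|ja] := ltnP j a; first by rewrite hp // mul0r.
rewrite hq ?mulr0 //. have := ltn_ord j. lia.
Qed.

Lemma lowzMl n p q : lowz n q -> lowz n (p * q).
Proof. by move=> hq; rewrite -[n]add0n; apply: lowzM => // m. Qed.

Lemma lowzMr n p q : lowz n p -> lowz n (p * q).
Proof. by move=> hp; rewrite -[n]addn0; apply: lowzM => // m. Qed.

Lemma lowz_sum n (I : Type) (r : seq I) (P : pred I) (F : I -> {poly K}) :
  (forall i, P i -> lowz n (F i)) -> lowz n (\sum_(i <- r | P i) F i).
Proof. move=> h; apply: (big_ind (lowz n)) => //; [exact: lowz0|exact: lowzD]. Qed.

Lemma lowz_prod (I : Type) (r : seq I) (P : pred I) (d : I -> nat) (F : I -> {poly K}) :
  (forall i, P i -> lowz (d i) (F i)) -> lowz (\sum_(i <- r | P i) d i) (\prod_(i <- r | P i) F i).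
Proof.
move=> h; apply: (big_ind2 (fun a p => lowz a p)) => //.
by move=> ????; apply: lowzM.
Qed.

Definition cong n (p q : {poly K}) := lowz n (p - q).

Lemma cong_refl n p : cong n p p.
Proof. by rewrite /cong subrr; apply: lowz0. Qed.

Lemma congD n p1 p2 q1 q2 : cong n p1 q1 -> cong n p2 q2 -> cong n (p1 + p2) (q1 + q2).
Proof.
move=> h1 h2; rewrite /cong.
have -> : p1 + p2 - (q1 + q2) = (p1 - q1) + (p2 - q2) by ring.
exact: lowzD.
Qed.

Lemma congM n p1 p2 q1 q2 : cong n p1 q1 -> cong n p2 q2 -> cong n (p1 * p2) (q1 * q2).
Proof.
move=> h1 h2; rewrite /cong.
have -> : p1 * p2 - (q1 * q2) = p1 * (p2 - q2) + (p1 - q1) * q2 by ring.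
by apply: lowzD; [apply: lowzMl|apply: lowzMr].
Qed.

Lemma cong_sum n (I : Type) (r : seq I) (P : pred I) (F G : I -> {poly K}) :
  (forall i, P i -> cong n (F i) (G i)) -> cong n (\sum_(i <- r | P i) F i) (\sum_(i <- r | P i) G i).
Proof. move=> h; apply: (big_ind2 (cong n)) => [|????|i Pi]; [exact: cong_refl| exact: congD| exact: h]. Qed.

Lemma cong_prod n (I : Type) (r : seq I) (P : pred I) (F G : I -> {poly K}) :
  (forall i, P i -> cong n (F i) (G i)) -> cong n (\prod_(i <- r | P i) F i) (\prod_(i <- r | P i) G i).
Proof. move=> h; apply: (big_ind2 (cong n)) => [|????|i Pi]; [exact: cong_refl| exact: congM| exact: h]. Qed.

Lemma cong_lowz n p q : cong n p q -> lowz n q -> lowz n p.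
Proof.
move=> h hq; have -> : p = (p - q) + q by ring. exact: lowzD.
Qed.

Lemma cong_det n k (A B : 'M[{poly K}]_k) : (forall i j, cong n (A i j) (B i j)) ->
  cong n (\det A) (\det B).
Proof.
move=> h; rewrite /determinant; apply: cong_sum => s _; apply: congM; first exact: cong_refl.
by apply: cong_prod => i _.
Qed.

Lemma cong_mulmx n a b c (A A' : 'M[{poly K}]_(a, b)) (B B' : 'M[{poly K}]_(b, c)) :
  (forall i j, cong n (A i j) (A' i j)) -> (forall i j, cong n (B i j) (B' i j)) ->
  forall i j, cong n ((A *m B) i j) ((A' *m B') i j).
Proof.
move=> hA hB i j; rewrite !mxE; apply: cong_sum => l _; exact: congM.
Qed.

End Lowz.

Lemma rearr r (i0 : 'I_r) (mu : 'I_r -> nat) (S T : {set 'I_r}) :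
  (forall i j : 'I_r, (i <= j)%N -> (mu j <= mu i)%N) ->
  #|S| = #|T| -> (forall j, (j \in T) = (i0 <= j)%N) ->
  (\sum_(j in T) mu j <= \sum_(j in S) mu j)%N.
Proof.
move=> mono hc hT.
rewrite (big_setID (A := T) S) (big_setID (A := S) T) /= setIC.
rewrite leq_add2l.
have c1 : #|T :\: S| = #|S :\: T|.
  have := cardsID S T; have := cardsID T S; rewrite setIC hc; lia.
apply: (@leq_trans (#|T :\: S| * mu i0)).
  rewrite -sum_nat_const; apply: leq_sum => j; rewrite inE hT => /andP[_ h].
  exact: mono.
rewrite c1 -sum_nat_const; apply: leq_sum => j; rewrite inE hT => /andP[h _].
apply: mono; lia.
Qed.

Section Det.
Variable K : comNzRingType.

Lemma det_mul_expand k r (X : 'M[{poly K}]_(k, r)) (M : 'M[{poly K}]_(r, k)) :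
  \det (X *m M) = \sum_(g : {ffun 'I_k -> 'I_r})
     (\prod_a X a (g a)) * \det (\matrix_(a, b) M (g a) b).
Proof.
rewrite /determinant.
under eq_bigr => s _ do under eq_bigr => a _ do rewrite mxE.
under eq_bigr => s _ do rewrite bigA_distr_bigA mulr_sumr.
rewrite exchange_big /=; apply: eq_bigr => g _.
rewrite mulr_sumr; apply: eq_bigr => s _.
rewrite big_split /=.
under [X in _ = _ * (_ * X)]eq_bigr => a _ do rewrite mxE.
by rewrite mulrCA.
Qed.

Lemma lowz_det_mul n k r (X : 'M[{poly K}]_(k, r)) (M : 'M[{poly K}]_(r, k)) (mu : 'I_r -> nat) :
  (forall j c, lowz (mu j) (M j c)) ->
  (forall g : {ffun 'I_k -> 'I_r}, injective g -> (n <= \sum_a mu (g a))%N) ->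
  lowz n (\det (X *m M)).
Proof.
move=> hM hg; rewrite det_mul_expand; apply: lowz_sum => g _; apply: lowzMl.
have [inj|ninj] := boolP (injectiveb g).
  apply: lowzW (hg g (injectiveP _ inj)) _.
  rewrite /determinant; apply: lowz_sum => s _; apply: lowzMl.
  by apply: lowz_prod => a _; rewrite mxE.
case/injectivePn: ninj => a1 [a2 ne eq].
rewrite (determinant_alternate ne); first exact: lowz0.
by move=> b; rewrite !mxE eq.
Qed.

End Det.

Section Trunc.
Variable K : comNzRingType.

Definition trunc (n : nat) (f : pser K) : {poly K} := \poly_(i < n) f i.
Definition tmx n m p (A : arcmx K m p) : 'M[{poly K}]_(m, p) := \matrix_(i, j) trunc n (A i j).

Lemma cong_trans n (p q s : {poly K}) : cong n p q -> cong n q s -> cong n p s.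
Proof. move=> h1 h2; rewrite /cong. have -> : p - s = (p - q) + (q - s) by ring. exact: lowzD. Qed.

Lemma trunc_amul n m p l (A : arcmx K m p) (B : arcmx K p l) i j :
  cong n (trunc n (amul A B i j)) ((tmx n A *m tmx n B) i j).
Proof.
move=> q hq; rewrite coefB coef_poly hq !mxE coef_sum /amul.
rewrite [X in _ - X = _](_ : _ = \sum_(l0 < p) pmul (A i l0) (B l0 j) q) ?subrr //.
apply: eq_bigr => l0 _; rewrite coefM /pmul; apply: eq_bigr => t _.
rewrite !mxE !coef_poly.
have ht := ltn_ord t.
have -> : (t < n)%N by lia.
by have -> : (q - t < n)%N by lia.
Qed.

Lemma trunc_ext n (f g : pser K) : (forall k, f k = g k) -> trunc n f = trunc n g.
Proof. by move=> h; apply/polyP => q; rewrite !coef_poly h. Qed.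

Lemma orbit_cong n m p (g : arcmx K m m) (D : arcmx K m p) (h : arcmx K p p) (A : arcmx K m p) :
  aeq A (amul (amul g D) h) ->
  forall i j, cong n (trunc n (A i j)) ((tmx n g *m tmx n D *m tmx n h) i j).
Proof.
move=> hA i j; rewrite (trunc_ext n (hA i j)).
apply: (cong_trans (q := (tmx n (amul g D) *m tmx n h) i j)); first exact: trunc_amul.
apply: cong_mulmx => // [i1 j1|i1 j1]; last by rewrite /tmx !mxE; apply: cong_refl.
rewrite {1}/tmx mxE; exact: trunc_amul.
Qed.

Variables m p : nat.

Lemma polyfun_ext (f g : arcmx K m p -> K) : polyfun f -> f =1 g -> polyfun g.
Proof. by move=> hf e; rewrite -(functional_extensionality _ _ e). Qed.

Lemma polyfun_sum (I : Type) (r : seq I) (P : pred I) (F : I -> arcmx K m p -> K) :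
  (forall i, polyfun (F i)) -> polyfun (fun A => \sum_(i <- r | P i) F i A).
Proof.
move=> h; elim: r => [|i r IH].
  by apply: polyfun_ext (pf_const _ _ 0) _ => A; rewrite big_nil.
case Pi: (P i).
  by apply: polyfun_ext (pf_add (h i) IH) _ => A; rewrite big_cons Pi.
by apply: polyfun_ext IH _ => A; rewrite big_cons Pi.
Qed.

Definition ppf (F : arcmx K m p -> {poly K}) := forall q, polyfun (fun A => (F A)`_q).

Lemma ppf_const (c : {poly K}) : ppf (fun _ => c).
Proof. by move=> q; apply: pf_const. Qed.

Lemma ppf_add F G : ppf F -> ppf G -> ppf (fun A => F A + G A).
Proof. by move=> hF hG q; apply: polyfun_ext (pf_add (hF q) (hG q)) _ => A; rewrite coefD. Qed.

Lemma ppf_mul F G : ppf F -> ppf G -> ppf (fun A => F A * G A).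
Proof.
move=> hF hG q.
have hs := @polyfun_sum _ (index_enum 'I_q.+1) xpredT
   (fun (t : 'I_q.+1) (A : arcmx K m p) => (F A)`_t * (G A)`_(q - t))
   (fun t => pf_mul (hF t) (hG (q - t)%N)).
by apply: polyfun_ext hs _ => A; rewrite coefM.
Qed.

Lemma ppf_sum (I : Type) (r : seq I) (P : pred I) (F : I -> arcmx K m p -> {poly K}) :
  (forall i, ppf (F i)) -> ppf (fun A => \sum_(i <- r | P i) F i A).
Proof.
move=> h q; apply: polyfun_ext (@polyfun_sum _ r P (fun i A => (F i A)`_q) (fun i => h i q)) _.
by move=> A; rewrite coef_sum.
Qed.

Lemma ppf_prod (I : Type) (r : seq I) (P : pred I) (F : I -> arcmx K m p -> {poly K}) :
  (forall i, ppf (F i)) -> ppf (fun A => \prod_(i <- r | P i) F i A).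
Proof.
move=> h; elim: r => [|i r IH].
  by move=> q; apply: polyfun_ext (ppf_const 1 q) _ => A; rewrite big_nil.
case Pi: (P i).
  by move=> q; apply: polyfun_ext (ppf_mul (h i) IH q) _ => A; rewrite big_cons Pi.
by move=> q; apply: polyfun_ext (IH q) _ => A; rewrite big_cons Pi.
Qed.

Lemma ppf_trunc n i j : ppf (fun A => trunc n (A i j)).
Proof.
move=> q; case hq: (q < n)%N.
  by apply: (polyfun_ext (pf_coord K i j q)) => A; rewrite coef_poly hq.
by apply: polyfun_ext (pf_const _ _ 0) _ => A; rewrite coef_poly hq.
Qed.

Lemma ppf_det k (F : 'I_k -> 'I_k -> arcmx K m p -> {poly K}) :
  (forall a b, ppf (F a b)) -> ppf (fun A => \det (\matrix_(a, b) F a b A)).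
Proof.
move=> h; rewrite /determinant.
apply: ppf_sum => s; apply: ppf_mul; first exact: ppf_const.
have -> : (fun A : arcmx K m p => \prod_i (\matrix_(a, b) F a b A) i (s i)) =
          (fun A => \prod_i F i (s i) A).
  by apply: functional_extensionality => A; apply: eq_bigr => i _; rewrite mxE.
by apply: ppf_prod => a; apply: h.
Qed.

End Trunc.

Lemma eaddA : associative eadd.
Proof. by case=> [a|] [b|] [c|] //=; rewrite addnA. Qed.
Lemma eaddC : commutative eadd.
Proof. by case=> [a|] [b|] //=; rewrite addnC. Qed.
Lemma eadd0 : left_id (Fin 0) eadd.
Proof. by case. Qed.
HB.instance Definition _ := Monoid.isComLaw.Build enat (Fin 0) eadd eaddA eaddC eadd0.

Definition ecap (n : nat) (e : enat) : nat := match e with Fin a => minn a n | Inf => n end.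

Lemma ecap_add n a b : (ecap n (eadd a b) <= ecap n a + ecap n b)%N.
Proof. case: a => [a|]; case: b => [b|] /=; lia. Qed.

Lemma ecap_sum n (I : Type) (r : seq I) (P : pred I) (F : I -> enat) :
  (ecap n (\big[eadd/Fin 0]_(i <- r | P i) F i) <= \sum_(i <- r | P i) ecap n (F i))%N.
Proof.
apply: (big_ind2 (fun e x => ecap n e <= x)%N) => //=.
- by rewrite min0n.
- move=> e1 x1 e2 x2 h1 h2; apply: leq_trans (ecap_add _ _ _) _; exact: leq_add.
Qed.

Section Units.
Variable K : comNzRingType.

Lemma amul_one_l m p (A : arcmx K m p) : aeq (amul (@aone K m) A) A.
Proof.
move=> i j k; rewrite /amul (bigD1 i) //= big1 ?addr0.
  rewrite /pmul big_ord_recl /= /aone eqxx /= mul1r subn0 big1 ?addr0 // => q _.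
  by rewrite mul0r.
move=> l nl; rewrite /pmul big1 // => q _; rewrite /aone.
by rewrite eq_sym (negbTE nl) /= mul0r.
Qed.

Lemma amul_one_r m p (A : arcmx K m p) : aeq (amul A (@aone K p)) A.
Proof.
move=> i j k; rewrite /amul (bigD1 j) //= big1 ?addr0.
  rewrite /pmul big_ord_recr /= /aone eqxx subnn /= mulr1 big1 ?add0r // => q _.
  have hq := ltn_ord q.
  have -> : ((k - q)%N == 0%N) = false by apply/eqP; lia.
  by rewrite mulr0.
move=> l nl; rewrite /pmul big1 // => q _; rewrite /aone.
by rewrite (negbTE nl) /= mulr0.
Qed.

Lemma delta_in_orbit r s (lam : 'I_r -> enat) : arc_orbit lam (@delta_lam K r s lam).
Proof.
exists (@aone K r), (@aone K r), (@aone K s), (@aone K s).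
split; first by split; apply: amul_one_l.
split; first by split; apply: amul_one_l.
move=> i j k; rewrite amul_one_r amul_one_l //.
Qed.

End Units.

Section Main.
Variables (K : comNzRingType) (r s : nat) (i0 : 'I_r).
Hypothesis hrs : (r <= s)%N.

Lemma rho_p (a : 'I_(r - i0)) : (i0 + a < r)%N.
Proof. have := ltn_ord a; have := ltn_ord i0; lia. Qed.
Definition rho (a : 'I_(r - i0)) : 'I_r := Ordinal (rho_p a).
Lemma kappa_p (a : 'I_(r - i0)) : (s - r + (i0 + a) < s)%N.
Proof. have := ltn_ord a; have := ltn_ord i0; lia. Qed.
Definition kappa (a : 'I_(r - i0)) : 'I_s := Ordinal (kappa_p a).

Lemma rho_inj : injective rho.
Proof. move=> a b /(congr1 val) /= h; apply: val_inj => /=; lia. Qed.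

Lemma rho_mem j : (j \in rho @: setT) = (i0 <= j)%N.
Proof.
apply/imsetP/idP => [[a _ ->]|h]; first by rewrite /= leq_addr.
have hj : (j - i0 < r - i0)%N by have := ltn_ord j; lia.
exists (Ordinal hj); first by rewrite inE.
apply: val_inj => /=; lia.
Qed.

Lemma lowz_trunc_tpow n e : lowz (ecap n e) (trunc n (@tpow K e)).
Proof.
move=> q hq; rewrite coef_poly; case: ifP => // _; rewrite /tpow.
case: e hq => [a|] //= hq; case: eqP => // eq; lia.
Qed.

Lemma trunc0 n : trunc n (fun _ : nat => (0 : K)) = 0.
Proof. by apply/polyP => q; rewrite coef_poly coef0; case: ifP. Qed.

Lemma orbit_minor_lowz n (lam : 'I_r -> enat) : prepartition lam ->
  ele (Fin n) (tailsum lam i0) ->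
  forall A : arcmx K r s, arc_orbit lam A ->
  lowz n (\det (\matrix_(a, b) trunc n (A (rho a) (kappa b)))).
Proof.
move=> mono hn A [g [ginv [h [hinv [_ [_ hA]]]]]].
set D := @delta_lam K r s lam.
pose X := \matrix_(a, l) tmx n g (rho a) l.
pose M := tmx n D *m \matrix_(l, b) tmx n hinv l (kappa b).
apply: (cong_lowz (q := \det (X *m M))).
  apply: cong_det => a b.
  have -> : (X *m M) a b = (tmx n g *m tmx n D *m tmx n hinv) (rho a) (kappa b).
    rewrite -mulmxA [RHS]mxE [LHS]mxE; apply: eq_bigr => l _; rewrite !mxE; congr (_ * _).
    by apply: eq_bigr => l' _; rewrite !mxE.
  rewrite mxE; exact: orbit_cong.
apply: (@lowz_det_mul K n _ _ X M (fun j => ecap n (lam j))).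
- move=> j c; rewrite mxE; apply: lowz_sum => l _; apply: lowzMr.
  rewrite /tmx mxE /D /delta_lam; case: eqP => _; first exact: lowz_trunc_tpow.
  by rewrite trunc0; apply: lowz0.
- move=> g' injg.
  have e1 : (\sum_a ecap n (lam (g' a)) = \sum_(j in g' @: setT) ecap n (lam j))%N.
    rewrite big_imset /=; last by move=> x y _ _; apply: injg.
    by apply: eq_bigl => a; rewrite inE.
  have e2 : (\sum_(j < r | (i0 <= j)%N) ecap n (lam j) = \sum_(j in rho @: setT) ecap n (lam j))%N.
    by apply: eq_bigl => j; rewrite rho_mem.
  have e3 : ecap n (tailsum lam i0) = n.
    by move: hn; case: (tailsum lam i0) => [a|] //= h1; lia.
  rewrite e1 -{1}e3; apply: leq_trans (ecap_sum _ _ _ _) _; rewrite e2.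
  apply: (rearr (i0 := i0)).
  + move=> i j hij; have := mono i j hij.
    by case: (lam i) => [x|]; case: (lam j) => [y|] //= hxy; lia.
  + by rewrite !card_imset //; apply: rho_inj.
  + by move=> j; rewrite rho_mem.
Qed.

Lemma delta_minor n (lam' : 'I_r -> enat) :
  \matrix_(a, b) trunc n (@delta_lam K r s lam' (rho a) (kappa b)) =
  diag_mx (\row_a trunc n (@tpow K (lam' (rho a)))).
Proof.
apply/matrixP => a b; rewrite !mxE /delta_lam /=.
have [->|nab] := eqVneq a b; first by rewrite eqxx mulr1n.
rewrite mulr0n ifF ?trunc0 //.
apply/eqP => hh; move/eqP: nab; apply; apply: val_inj => /=; lia.
Qed.

Lemma tail_reindex (lam' : 'I_r -> enat) :
  tailsum lam' i0 = \big[eadd/Fin 0]_(a < r - i0) lam' (rho a).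
Proof.
rewrite /tailsum (eq_bigl (fun j => j \in rho @: setT)); last by move=> j; rewrite rho_mem.
rewrite big_imset /=; last by move=> x y _ _; apply: rho_inj.
by apply: eq_bigl => a; rewrite inE.
Qed.

End Main.

Lemma prod_tpow (K : comNzRingType) n (I : Type) (l : seq I) (F : I -> enat) m :
  \big[eadd/Fin 0]_(i <- l) F i = Fin m -> (m < n)%N ->
  \prod_(i <- l) trunc n (@tpow K (F i)) = 'X^m.
Proof.
elim: l m => [|x l IH] m.
  by rewrite !big_nil => -[<-] _; rewrite expr0.
rewrite big_cons; case hx: (F x) => [a|] //.
case hl: (\big[eadd/Fin 0]_(i <- l) F i) => [b|] //= [<-] hm.
rewrite big_cons hx (IH b hl) ?exprD; last lia.
congr (_ * _); apply/polyP => q; rewrite coef_poly coefXn /tpow.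
case: ifP => hq //; case: eqP => // hqa; lia.
Qed.

Lemma key (K : comNzRingType) (r s : nat) (i0 : 'I_r) (hrs : (r <= s)%N)
  (lam lam' : 'I_r -> enat) n : prepartition lam ->
  (forall B : arcmx K r s, arc_orbit lam' B -> zclosure (arc_orbit lam) B) ->
  ele (Fin n) (tailsum lam i0) -> ele (Fin n) (tailsum lam' i0).
Proof.
move=> mono hyp hn; case ht: (tailsum lam' i0) => [n'|] //=.
rewrite leqNgt; apply/negP => hlt.
pose f := fun A : arcmx K r s =>
  (\det (\matrix_(a, b) trunc n (A (@rho r s i0 hrs a) (@kappa r s i0 hrs b))))`_n'.
have pf : polyfun f.
  have h1 := @ppf_det K r s (r - i0)%N
    (fun a b (A : arcmx K r s) => trunc n (A (@rho r s i0 hrs a) (@kappa r s i0 hrs b)))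
    (fun a b => ppf_trunc K n (@rho r s i0 hrs a) (@kappa r s i0 hrs b)) n'.
  exact: h1.
have z : forall A, arc_orbit lam A -> f A = 0.
  by move=> A hA; apply: (orbit_minor_lowz hrs mono hn hA).
have := hyp _ (delta_in_orbit K s lam') f pf z.
rewrite /f delta_minor det_diag.
under eq_bigr => a _ do rewrite mxE.
rewrite (@prod_tpow K n _ _ (fun a => lam' (@rho r s i0 hrs a)) n') ?coefXn ?eqxx ?oner_eq0 //.
  by move/eqP; rewrite oner_eq0.
by rewrite (tail_reindex i0 hrs lam') in ht.
Qed.

Theorem proposition4p2 (R : realType) (r s : nat) (lam lam' : 'I_r -> enat) :
  (r <= s)%N ->
  prepartition lam -> prepartition lam' ->
  (forall B : arcmx (R[i]) r s, arc_orbit lam' B -> zclosure (arc_orbit lam) B) ->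
  ledom lam lam'.
Proof.
move=> hrs mono _ hyp i0.
case ht: (tailsum lam i0) => [n|].
  have := @key _ r s i0 hrs lam lam' n mono hyp; rewrite ht => /(_ (leqnn n)).
  by [].
case ht': (tailsum lam' i0) => [n'|] //.
have := @key _ r s i0 hrs lam lam' n'.+1 mono hyp; rewrite ht ht' /= ltnn.
by move=> /(_ isT).
Qed.
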